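(* Under the setup in the context, $$\sup_{t\in\mathbb{R}}\big|\mathbb{P}(\|T_n\|_\infty\le t)-\mathbb{P}(\|T_n^Y\|_\infty\le t)\big|\le n\,\mathbb{P}\Big(\max_{1\le j\le d}\frac{(e_j^\top X_1)^2}{a_j^2}>n\Big).$$
   Context: Let $n\ge1$, $d\ge1$, and let $X_1,\dots,X_n$ be IID integrable random vectors in $\mathbb{R}^d$ with $\mathbb{E}X_1=0$ and $\mathbb{P}(e_j^\top X_1\neq0)>0$ for every $j$, where $e_j$ is the $j$-th canonical basis vector; $\|\cdot\|_\infty$ is the max-norm. For each $j$ define $a_j\ge0$ by $a_j^2:=\sup\{b\ge0:\mathbb{E}[(e_j^\top X_1)^2\mathbf{1}\{(e_j^\top X_1)^2\le bn\}]\ge b\}$, and $e_j^\top Y_i := \frac{e_j^\top X_i}{a_j n^{1/2}}\mathbf{1}\{(e_j^\top X_i)^2\le a_j^2 n\}$. Define $e_j^\top T_n := |\sum_{i=1}^n e_j^\top X_i|/\sqrt{\sum_{i=1}^n (e_j^\top X_i)^2}$ and $e_j^\top T_n^Y := |\sum_{i=1}^n e_j^\top Y_i|/\sqrt{\sum_{i=1}^n (e_j^\top Y_i)^2}$ (with the same fixed convention for $0/0$ in both). *)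

(* Defs.v *)
From HB Require Import structures.
From mathcomp Require Import all_boot all_order all_algebra.
From mathcomp Require Import all_classical all_reals all_analysis.
Set Implicit Arguments. Unset Strict Implicit. Unset Printing Implicit Defensive.
Import Order.TTheory GRing.Theory Num.Theory.
Import numFieldNormedType.Exports.
Local Open Scope classical_set_scope.
Local Open Scope ring_scope.

Section Defs.
Context {dO : measure_display} {Omega : measurableType dO} {R : realType}.

(* The i-th random vector X_i : Omega -> R^d, with R^d modelled as 'I_d -> R.
   X i j = e_j^T X_i. *)
Definition rvec (d : nat) (X : nat -> 'I_d -> Omega -> R) (i : nat) :
  Omega -> ('I_d -> R) := fun w j => X i j w.

Definition coord_cylinders (d : nat) : set (set ('I_d -> R)) :=
  [set C | exists (j : 'I_d) (B : set R), measurable B /\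
           C = (fun x : 'I_d -> R => x j) @^-1` B].

Definition borel_Rd (d : nat) (C : set ('I_d -> R)) : Prop :=
  <<s @coord_cylinders d >> C.

Definition sigma_of (d : nat) (X : nat -> 'I_d -> Omega -> R) (i : nat)
  (A : set Omega) : Prop :=
  exists C, borel_Rd C /\ A = rvec X i @^-1` C.

(* X_0, ..., X_{n-1} (the paper's X_1..X_n) are IID. *)
Definition iid_vectors (P : probability Omega R) (n d : nat)
  (X : nat -> 'I_d -> Omega -> R) : Prop :=
  (forall A : nat -> set Omega, (forall i, (i < n)%N -> sigma_of X i (A i)) ->
     P (\bigcap_(i in [set k | (k < n)%N]) A i) = (\prod_(i < n) P (A i))%E)
  /\
  (forall i, (i < n)%N -> forall C, borel_Rd C ->
     P (rvec X i @^-1` C) = P (rvec X 0 @^-1` C)).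

Definition a_sq (P : probability Omega R) (n d : nat)
  (X : nat -> 'I_d -> Omega -> R) (j : 'I_d) : R :=
  sup [set b : R | 0 <= b /\
     (b%:E <= \int[P]_w ((X 0 j w ^+ 2 * (if X 0 j w ^+ 2 <= b * n%:R then 1 else 0))%:E))%E].

Definition a_coef (P : probability Omega R) (n d : nat)
  (X : nat -> 'I_d -> Omega -> R) (j : 'I_d) : R :=
  Num.sqrt (a_sq P n X j).

Definition Ytrunc (P : probability Omega R) (n d : nat)
  (X : nat -> 'I_d -> Omega -> R) (i : nat) (j : 'I_d) (w : Omega) : R :=
  X i j w / (a_coef P n X j * Num.sqrt n%:R) *
  (if X i j w ^+ 2 <= a_coef P n X j ^+ 2 * n%:R then 1 else 0).

Definition ratio (c num den : R) : R := if den == 0 then c else num / den.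

Definition selfnorm (c : R) (n d : nat) (Z : nat -> 'I_d -> Omega -> R)
  (j : 'I_d) (w : Omega) : R :=
  ratio c `|\sum_(i < n) Z i j w| (Num.sqrt (\sum_(i < n) Z i j w ^+ 2)).

Definition maxnorm (d : nat) (v : 'I_d -> R) : R := \big[Num.max/0]_(j < d) `|v j|.

End Defs.

(* Main.v *)
Require Import Defs.
From HB Require Import structures.
From mathcomp Require Import all_boot all_order all_algebra.
From mathcomp Require Import all_classical all_reals all_analysis.
From mathcomp Require Import measurable_realfun.
From mathcomp Require Import lra.
Import Order.TTheory GRing.Theory Num.Theory.
Import numFieldNormedType.Exports.
Local Open Scope classical_set_scope.
Local Open Scope ring_scope.

Lemma inv_mfun (R : realType) : measurable_fun [set: R] (@GRing.inv R).
Proof.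
have -> : (@GRing.inv R) = (fun x => if x == 0 then 0 else x^-1).
  by apply/funext => x; case: eqP => // ->; rewrite invr0.
apply: measurable_fun_if => //.
- apply: measurable_fun_eqr => //.
- rewrite (_ : _ `&` _ = ~` [set 0]); last first.
    apply/seteqP; split => x /=; first by case => _ /eqP.
    by move=> /eqP/negbTE ->.
  have oD : open (~` [set (0:R)]).
    apply: closed_openC. exact: (accessible_closed_set1 (hausdorff_accessible (@Rhausdorff R))).
  refine (@open_continuous_measurable_fun R _ _ oD _).
  move=> x; rewrite inE => x0; apply: inv_continuous; exact/eqP.
Qed.

Lemma sqrt_mfun (R : realType) : measurable_fun [set: R] (@Num.sqrt R).
Proof. apply: continuous_measurable_fun; exact: sqrt_continuous. Qed.

Section Meas.
Context {d} {T : measurableType d} {R : realType}.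
Implicit Types f g : T -> R.

Lemma mfunV {f : T -> R} : measurable_fun setT f -> measurable_fun setT (fun w => (f w)^-1).
Proof. by move=> mf; apply: (measurableT_comp (inv_mfun R) mf). Qed.

Lemma mfunS {f : T -> R} : measurable_fun setT f -> measurable_fun setT (fun w => Num.sqrt (f w)).
Proof. by move=> mf; apply: (measurableT_comp (sqrt_mfun R) mf). Qed.

Lemma mfunN {f : T -> R} : measurable_fun setT f -> measurable_fun setT (fun w => `|f w|).
Proof. by move=> mf; apply: (measurableT_comp _ mf). Qed.

Lemma mfun_bigmax {I : Type} (s : seq I) (F : I -> T -> R) :
  (forall i, measurable_fun setT (F i)) ->
  measurable_fun setT (fun w => \big[Num.max/0]_(i <- s) F i w).
Proof.
move=> mF; elim: s => [|x s IH].
  under eq_fun do rewrite big_nil. exact: measurable_cst.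
under eq_fun do rewrite big_cons.
exact: (measurable_maxr (mF x) IH).
Qed.

Lemma mfun_bigor {I : Type} (s : seq I) (F : I -> T -> bool) :
  (forall i, measurable_fun setT (F i)) ->
  measurable_fun setT (fun w => \big[orb/false]_(i <- s) F i w).
Proof.
move=> mF; elim: s => [|x s IH].
  under eq_fun do rewrite big_nil. exact: measurable_cst.
under eq_fun do rewrite big_cons.
exact: (measurable_or (mF x) IH).
Qed.

Lemma mset_le f t : measurable_fun setT f -> measurable [set w | f w <= t].
Proof.
move=> mf; have := mf measurableT `]-oo, t]%classic (measurable_itv _).
rewrite setTI; congr measurable; apply/seteqP; split => w /=;
  by rewrite in_itv /=.
Qed.

Lemma mset_bool (b : T -> bool) : measurable_fun setT b -> measurable [set w | b w].
Proof.
move=> mb; have := mb measurableT [set true] I.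
by rewrite setTI; congr measurable; apply/seteqP; split => w /=.
Qed.
End Meas.

Section Meas2.
Context (dO : measure_display) (Omega : measurableType dO) (R : realType).

Lemma mfun_selfnorm (c : R) n d (Z : nat -> 'I_d -> Omega -> R) j :
  (forall i j, measurable_fun setT (Z i j)) ->
  measurable_fun setT (selfnorm c n Z j).
Proof.
move=> mZ.
have mS : measurable_fun setT (fun w => \sum_(i < n) Z i j w).
  by apply: measurable_sum => i; exact: mZ.
have mQ : measurable_fun setT (fun w => Num.sqrt (\sum_(i < n) Z i j w ^+ 2)).
  by apply: mfunS; apply: measurable_sum => i; apply: measurable_funX; exact: mZ.
rewrite /selfnorm /ratio.
apply: measurable_fun_ifT.
- exact: (measurable_fun_eqr mQ (measurable_cst _)).
- exact: measurable_cst.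
- have H := measurable_funM (mfunN mS) (mfunV mQ); exact: H.
Qed.

Lemma mfun_maxnorm d (F : 'I_d -> Omega -> R) :
  (forall j, measurable_fun setT (F j)) ->
  measurable_fun setT (fun w => maxnorm (fun j => F j w)).
Proof.
move=> mF; rewrite /maxnorm.
have H := mfun_bigmax (index_enum (ordinal d)) (fun j w => `|F j w|) (fun j => mfunN (mF j)); exact: H.
Qed.

Lemma mfun_Ytrunc (P : probability Omega R) n d (X : nat -> 'I_d -> Omega -> R) :
  (forall i j, measurable_fun setT (X i j)) ->
  forall i j, measurable_fun setT (Ytrunc P n X i j).
Proof.
move=> mX i j; rewrite /Ytrunc.
apply: (measurable_funM (measurable_funM (mX i j) (measurable_cst _))).
apply: measurable_fun_ifT.
- exact: (measurable_fun_ler (measurable_funX _ (mX i j)) (measurable_cst _)).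
- exact: measurable_cst.
- exact: measurable_cst.
Qed.
End Meas2.

Section Key.
Context (dO : measure_display) (Omega : measurableType dO) (R : realType).

Lemma selfnorm_eq (P : probability Omega R) n d (X : nat -> 'I_d -> Omega -> R) (c : R) j w :
  (1 <= n)%N ->
  (forall i, (i < n)%N -> ~ (n%:R < X i j w ^+ 2 / a_coef P n X j ^+ 2
                      \/ (a_coef P n X j = 0 /\ X i j w != 0))) ->
  selfnorm c n (Ytrunc P n X) j w = selfnorm c n X j w.
Proof.
move=> n1 H.
have a0 : 0 <= a_coef P n X j by apply: sqrtr_ge0.
have [aE|an0] := eqVneq (a_coef P n X j) 0.
  have X0 : forall i : 'I_n, X i j w = 0.
    move=> i; apply/eqP/negP => /negP Hx.
    by apply: (H i (ltn_ord i)); right; split.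
  have Y0 : forall i : 'I_n, Ytrunc P n X i j w = 0.
    by move=> i; rewrite /Ytrunc X0 !mul0r.
  have S1 : \sum_(i < n) Ytrunc P n X i j w = 0 by rewrite big1 // => i _; exact: Y0.
  have S2 : \sum_(i < n) X i j w = 0 by rewrite big1 // => i _; exact: X0.
  have S3 : \sum_(i < n) Ytrunc P n X i j w ^+ 2 = 0 by rewrite big1 // => i _; rewrite Y0 expr0n.
  have S4 : \sum_(i < n) X i j w ^+ 2 = 0 by rewrite big1 // => i _; rewrite X0 expr0n.
  by rewrite /selfnorm S1 S2 S3 S4.
have apos : 0 < a_coef P n X j by rewrite lt0r an0.
set k := (a_coef P n X j * Num.sqrt n%:R)^-1.
have nz : 0 < n%:R :> R.
  by rewrite ltr0n.
have kpos : 0 < k by rewrite invr_gt0 mulr_gt0 // sqrtr_gt0.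
have YE : forall i : 'I_n, Ytrunc P n X i j w = k * X i j w.
  move=> i; rewrite /Ytrunc.
  have : ~ (n%:R < X i j w ^+ 2 / a_coef P n X j ^+ 2).
    by move=> h; apply: (H i (ltn_ord i)); left.
  move/negP; rewrite -leNgt ler_pdivrMr ?exprn_gt0 // mulrC => ->.
  by rewrite mulr1 mulrC.
rewrite /selfnorm.
have T1 : \sum_(i < n) Ytrunc P n X i j w = k * \sum_(i < n) X i j w.
  by rewrite mulr_sumr; apply: eq_bigr => i _; exact: YE.
have T2 : \sum_(i < n) Ytrunc P n X i j w ^+ 2 = k ^+ 2 * \sum_(i < n) X i j w ^+ 2.
  by rewrite mulr_sumr; apply: eq_bigr => i _; rewrite YE exprMn.
rewrite T1 T2 normrM sqrtrM ?exprn_ge0 ?ltW // sqrtr_sqr !(ger0_norm (ltW kpos)).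
rewrite /Defs.ratio mulf_eq0 (negbTE (lt0r_neq0 kpos)) /=.
case: eqP => // _.
by rewrite -mulf_div divff ?mul1r // lt0r_neq0.
Qed.
End Key.

Theorem lemma2 (dO : measure_display) (Omega : measurableType dO) (R : realType)
  (P : probability Omega R) (n d : nat) (X : nat -> 'I_d -> Omega -> R) (c : R) :
  (1 <= n)%N -> (1 <= d)%N ->
  (forall i j, measurable_fun setT (X i j)) ->
  iid_vectors P n X ->
  (forall j, P.-integrable setT (fun w => (X 0%N j w)%:E)) ->
  (forall j, (\int[P]_w (X 0%N j w)%:E = 0)%E) ->
  (forall j, (0 < P [set w | X 0%N j w != 0%R])%E) ->
  (ereal_sup [set `| P [set w | (maxnorm (fun j => selfnorm c n X j w) <= t)%R]
                   - P [set w | (maxnorm (fun j => selfnorm c n (Ytrunc P n X) j w) <= t)%R] |%E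
              | t in [set: R]]
   <= n%:R%:E * P [set w | exists j : 'I_d,
                     (n%:R < X 0%N j w ^+ 2 / a_coef P n X j ^+ 2
                      \/ (a_coef P n X j = 0 /\ X 0%N j w != 0))%R])%E.
Proof.
move=> n1 d1 mX [_ iid] _ _ _.
pose Bset (j : 'I_d) : set R := [set r | n%:R < r ^+ 2 / a_coef P n X j ^+ 2
                      \/ (a_coef P n X j = 0 /\ r != 0)].
pose bB (j : 'I_d) (r : R) : bool := (n%:R < r ^+ 2 / a_coef P n X j ^+ 2)
                      || ((a_coef P n X j == 0) && (r != 0)).
have bBP : forall j r, Bset j r <-> bB j r.
  move=> j r; rewrite /Bset /bB /=; split.
    by case=> [->//|[/eqP -> ->]]; rewrite orbT.
  by case/orP => [->|/andP[/eqP -> ->]]; [left|right].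
have mbB : forall j, measurable_fun setT (bB j).
  move=> j; apply: measurable_or.
    apply: measurable_fun_ltr => //.
    have H := measurable_funM (measurable_funX 2 (@measurable_id _ R setT))
      (measurable_cst (T1 := R) (a_coef P n X j ^+ 2)^-1).
    exact: H.
  apply: measurable_and => //; apply: measurable_neg.
  have H := measurable_fun_eqr (@measurable_id _ R setT) (measurable_cst (T1 := R) (0:R)).
  exact: H.
have mB : forall j, measurable (Bset j).
  move=> j; rewrite (_ : Bset j = [set r | bB j r]); first exact: mset_bool.
  by apply/seteqP; split => r /= /bBP.
pose C : set ('I_d -> R) := [set x | exists j, Bset j (x j)].
have bC : borel_Rd C.
  rewrite (_ : C = \bigcup_k [set x | exists j : 'I_d, val j = k /\ Bset j (x j)]).
    apply: sigma_algebra_bigcup => k.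
    have [hk|hk] := ltnP k d.
      apply: sub_sigma_algebra; exists (Ordinal hk), (Bset (Ordinal hk)); split => //.
      apply/seteqP; split => x /=.
        case=> j [jk Bj]; have ej : j = Ordinal hk by apply: val_inj.
        by rewrite -ej.
      by move=> Bx; exists (Ordinal hk).
    rewrite (_ : [set x | _] = set0); first exact: sigma_algebra0.
    apply/seteqP; split => x //= [j [jk _]].
    by move: (ltn_ord j); rewrite jk ltnNge hk.
  apply/seteqP; split => x /=.
    by case=> j Bj; exists (val j) => //; exists j.
  by case=> k _ [j [_ Bj]]; exists j.
pose E (i : nat) : set Omega := rvec X i @^-1` C.
have mE : forall i, measurable (E i).
  move=> i; rewrite (_ : E i = [set w | \big[orb/false]_(j < d) bB j (X i j w)]).
    apply: mset_bool; apply: (mfun_bigor (index_enum 'I_d) (fun j w => bB j (X i j w))).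
    move=> j; exact: (measurableT_comp (mbB j) (mX i j)).
  apply/seteqP; split => w /=; rewrite big_orE.
    by case=> j /bBP Hj; apply/existsP; exists j.
  by case/existsP => j /bBP Hj; exists j.
pose U := \big[setU/set0]_(i < n) E i.
have mU : measurable U by apply: bigsetU_measurable => i _; exact: mE.
have UE : (P U <= n%:R%:E * P (E 0%N))%E.
  apply: (le_trans (@content_subadditive _ _ _ P U E n _ mU _)).
  - by move=> k _; exact: mE.
  - by [].
  rewrite (eq_bigr (fun _ => P (E 0%N))) => [|i _]; last exact: iid.
  by rewrite sumr_const card_ord mule_natl.
have key : forall t, (`| P [set w | (maxnorm (fun j => selfnorm c n X j w) <= t)%R]
   - P [set w | (maxnorm (fun j => selfnorm c n (Ytrunc P n X) j w) <= t)%R] | <= P U)%E.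
  move=> t.
  set A := [set w | _ <= t]; set B := [set w | _ <= t].
  have mA : measurable A.
    apply: mset_le; apply: mfun_maxnorm => j; exact: mfun_selfnorm.
  have mB' : measurable B.
    apply: mset_le; apply: mfun_maxnorm => j; apply: mfun_selfnorm.
    exact: mfun_Ytrunc.
  have eqAB : forall w, ~ U w -> A w <-> B w.
    move=> w nU; rewrite /A /B /=.
    have -> : (fun j => selfnorm c n (Ytrunc P n X) j w) = (fun j => selfnorm c n X j w).
      apply/funext => j; apply: selfnorm_eq => // i hi h; apply: nU.
      rewrite /U -bigcup_mkord; exists i => //; exists j; exact: h.
    by [].
  have sAB : A `<=` B `|` U.
    by move=> w Aw; case: (pselect (U w)) => [Uw|nU]; [right|left; apply/eqAB].
  have sBA : B `<=` A `|` U.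
    by move=> w Bw; case: (pselect (U w)) => [Uw|nU]; [right|left; apply/eqAB].
  have h1 : (P A <= P B + P U)%E.
    apply: le_trans (measureU2 _ mB' mU).
    by apply: le_measure => //; rewrite inE //; exact: measurableU.
  have h2 : (P B <= P A + P U)%E.
    apply: le_trans (measureU2 _ mA mU).
    by apply: le_measure => //; rewrite inE //; exact: measurableU.
  move: h1 h2.
  rewrite -(fineK (fin_num_measure P _ mA)) -(fineK (fin_num_measure P _ mB')).
  rewrite -(fineK (fin_num_measure P _ mU)).
rewrite -EFinD -EFinD -EFinN -EFinD abse_EFin !lee_fin => h1 h2.
  rewrite ler_norml; apply/andP; split; lra.
apply: ge_ereal_sup => _ [t _ <-].
exact: le_trans (key t) UE.
Qed.
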